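(* Under the Standing Setup (see context), let $\{x^k\}$ be the sequence generated by Algorithm 1 and let $f^*:=\inf_{x\in B[\bar x,\beta]}f(x)$. Then $\{f(x^k)\}$ converges to $f^*$, and $\{x^k\}$ converges to a point $x^*$ with $f(x^* )=f^*$.
   Context: $B(x,r)$, $B[x,r]$: open and closed Euclidean balls. For $\mu>0$: $e_\mu f(x):=\min_y\{f(y)+\frac{1}{2\mu}\|y-x\|^2\}$ (Moreau envelope), $P_\mu f(x):=\operatorname{argmin}_y\{f(y)+\frac{1}{2\mu}\|y-x\|^2\}$ (proximal operator). $\partial f$: limiting subdifferential. $f$ is $\rho$-weakly convex on $U$ if $f(\alpha x+(1-\alpha)y)\le \alpha f(x)+(1-\alpha)f(y)+\frac{\rho\alpha(1-\alpha)}{2}\|x-y\|^2$ for all $x,y\in U$, $\alpha\in[0,1]$. Standing Fact (cited): if $f$ is $\rho$-weakly convex on $\mathbb{R}^n$, $\rho>0$, $0\in\partial f(\bar x)$ and $\mu\in(0,1/\rho)$, there is $\alpha>0$ such that on $B[\bar x,\alpha]$, $P_\mu f$ is single-valued, $1/(1-\mu\rho)$-Lipschitz, equal to $(I+\mu\partial f)^{-1}$, and $e_\mu f$ is $C^1$ with $\nabla e_\mu f(x)=\mu^{-1}(x-P_\mu f(x))$. Standing Setup: $f:\mathbb{R}^n\to\mathbb{R}\cup\{+\infty\}$ is proper, lower semicontinuous, bounded below and $\rho$-weakly convex on $\mathbb{R}^n$, $\rho>0$; $\bar x\in\operatorname{dom}f$ with $0\in\partial f(\bar x)$. Fix $\bar\lambda>0$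 and bounded sequences $\{\gamma_k\},\{\lambda_k\}$ with $0<\bar\lambda<2\gamma_k<\lambda_k<1/\rho$ for all $k$. Let $\delta>0$ be such that, for every $k$, the Standing Fact holds on $B[\bar x,\delta]$ for $\mu=\gamma_k$ and $\mu=\lambda_k$, and (Assumption 1) the Moreau envelopes $e_{\gamma_k}f$ and $e_{\lambda_k}f$ are convex on $B[\bar x,\delta]$. For each $k$ let $L_k:=1+\frac{\lambda_k-\gamma_k}{\gamma_k}\bigl(1+\frac{1}{1-\gamma_k\rho}\bigr)$, pick $\sigma_k\in(0,2/L_k^2)$, set $\kappa_k:=1-2\sigma_k+\sigma_k^2L_k^2$, and let $\beta>0$ satisfy $\beta<\min\{\delta,\frac{\delta}{\sigma_k}(1-\sqrt{\kappa_k})\}$ for all $k$. Algorithm 1: choose $x^0\in B[\bar x,\beta]$. Given $x^k\in B[\bar x,\beta]$: (a) compute $z^k\in B(\bar x,\delta)$ with $z^k=x^k-(\lambda_k-\gamma_k)\nabla e_{\gamma_k}f(z^k)$; (b) set $x^{k+1}=z^k-\gamma_k(\lambda_k-\gamma_k)^{-1}(x^k-z^k)$. *)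

(* Defs.v *)
(* R^n is modelled as 'rV[R]_n with the Euclidean
   norm [enorm] and inner product [dotv] defined below (the library norm on
   'rV is the max norm).  Extended-valued functions are R^n -> \bar R. *)
From HB Require Import structures.
From mathcomp Require Import all_boot all_order all_algebra.
From mathcomp Require Import all_classical all_reals all_analysis.
Set Implicit Arguments.
Unset Strict Implicit.
Unset Printing Implicit Defensive.
Import Order.TTheory GRing.Theory Num.Theory.
Import numFieldNormedType.Exports.
Local Open Scope classical_set_scope.
Local Open Scope ring_scope.

Section Defs.
Variables (R : realType) (n : nat).
Notation vec := 'rV[R]_n.

Definition dotv (u v : vec) : R := \sum_(i < n) u ord0 i * v ord0 i.
Definition enorm (u : vec) : R := Num.sqrt (dotv u u).

Definition oball (x : vec) (r : R) : set vec := [set y | enorm (y - x) < r].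
Definition cball (x : vec) (r : R) : set vec := [set y | enorm (y - x) <= r].

Local Open Scope ereal_scope.

Definition weakly_convex_on (rho : R) (U : set vec) (f : vec -> \bar R) :=
  forall x y (a : R), U x -> U y -> (0 <= a <= 1)%R ->
    f (a *: x + (1 - a) *: y)%R <=
      a%:E * f x + (1 - a)%R%:E * f y
      + (rho * a * (1 - a) / 2 * enorm (x - y) ^+ 2)%R%:E.

Definition convex_on (U : set vec) (f : vec -> \bar R) :=
  weakly_convex_on 0 U f.

Definition proper_fun (f : vec -> \bar R) :=
  (exists x, f x \is a fin_num) /\ (forall x, f x != -oo).

Definition bounded_below (f : vec -> \bar R) :=
  exists m : R, forall x, m%:E <= f x.

Definition moreau (mu : R) (f : vec -> \bar R) (x : vec) : \bar R :=
  ereal_inf [set f y + (enorm (y - x) ^+ 2 / (2 * mu))%R%:E | y in setT].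

Definition is_prox (mu : R) (f : vec -> \bar R) (x p : vec) :=
  forall y, f p + (enorm (p - x) ^+ 2 / (2 * mu))%R%:E
            <= f y + (enorm (y - x) ^+ 2 / (2 * mu))%R%:E.

Definition frechet_subgrad (f : vec -> \bar R) (x v : vec) :=
  f x \is a fin_num /\
  forall eps : R, (0 < eps)%R -> exists2 d : R, (0 < d)%R &
    forall y, (enorm (y - x)%R < d)%R ->
      f x + (dotv v (y - x) - eps * enorm (y - x))%R%:E <= f y.

Definition limiting_subgrad (f : vec -> \bar R) (x v : vec) :=
  exists (xs vs : nat -> vec),
    xs @ \oo --> x /\ vs @ \oo --> v /\ (fun k => f (xs k)) @ \oo --> f x /\
    forall k, frechet_subgrad f (xs k) (vs k).

Definition is_gradient (phi : vec -> \bar R) (x g : vec) :=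
  phi x \is a fin_num /\
  forall eps : R, (0 < eps)%R -> exists2 d : R, (0 < d)%R &
    forall y, (enorm (y - x)%R < d)%R ->
      phi y \is a fin_num /\
      (`| fine (phi y) - fine (phi x) - dotv g (y - x) | <= eps * enorm (y - x))%R.

(* Conclusion of the cited Standing Fact on a set U for parameter mu. *)
Definition standing_fact_on (rho mu : R) (f : vec -> \bar R) (U : set vec) :=
  (forall x, U x -> exists! p, is_prox mu f x p) /\
  (forall x x' p p', U x -> U x' -> is_prox mu f x p -> is_prox mu f x' p' ->
     (enorm (p - p') <= (1 - mu * rho)^-1 * enorm (x - x'))%R) /\
  (* P_mu f = (I + mu df)^{-1} on U *)
  (forall x y, U x -> (is_prox mu f x y <-> limiting_subgrad f y (mu^-1 *: (x - y)))) /\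
  (* e_mu f is C^1 on U with gradient mu^{-1}(x - P_mu f x) (continuity of the
     gradient follows from the Lipschitz property above) *)
  (forall x p, U x -> is_prox mu f x p -> is_gradient (moreau mu f) x (mu^-1 *: (x - p))).

End Defs.

(* Main.v *)
Require Import Defs.
From HB Require Import structures.
From mathcomp Require Import all_boot all_order all_algebra.
From mathcomp Require Import all_classical all_reals all_analysis.
From mathcomp Require Import ring lra.
Set Implicit Arguments.
Unset Strict Implicit.
Unset Printing Implicit Defensive.
Import Order.TTheory GRing.Theory Num.Theory.
Import numFieldNormedType.Exports.
Local Open Scope classical_set_scope.
Local Open Scope ring_scope.

Section LA.
Variables (R : realType) (n : nat).
Implicit Types (u v w : 'rV[R]_n).

Lemma dotvC u v : dotv u v = dotv v u.
Proof. by apply: eq_bigr => i _; rewrite mulrC. Qed.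
Lemma dotvDl u v w : dotv (u + v) w = dotv u w + dotv v w.
Proof. by rewrite /dotv -big_split; apply: eq_bigr => i _; rewrite mxE mulrDl. Qed.
Lemma dotvDr u v w : dotv w (u + v) = dotv w u + dotv w v.
Proof. by rewrite dotvC dotvDl !(dotvC w). Qed.
Lemma dotvZl a u v : dotv (a *: u) v = a * dotv u v.
Proof. by rewrite /dotv mulr_sumr; apply: eq_bigr => i _; rewrite mxE mulrA. Qed.
Lemma dotvZr a u v : dotv v (a *: u) = a * dotv v u.
Proof. by rewrite dotvC dotvZl dotvC. Qed.
Lemma dotvNl u v : dotv (- u) v = - dotv u v.
Proof. by rewrite -scaleN1r dotvZl mulN1r. Qed.
Lemma dotvNr u v : dotv v (- u) = - dotv v u.
Proof. by rewrite dotvC dotvNl dotvC. Qed.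
Lemma dotvBl u v w : dotv (u - v) w = dotv u w - dotv v w.
Proof. by rewrite dotvDl dotvNl. Qed.
Lemma dotvBr u v w : dotv w (u - v) = dotv w u - dotv w v.
Proof. by rewrite dotvDr dotvNr. Qed.
Lemma dotv0l u : dotv 0 u = 0.
Proof. by rewrite /dotv big1 // => i _; rewrite mxE mul0r. Qed.
Lemma dotv0r u : dotv u 0 = 0.
Proof. by rewrite dotvC dotv0l. Qed.
Lemma dotv_ge0 u : 0 <= dotv u u.
Proof. by rewrite /dotv sumr_ge0 // => i _; rewrite -expr2 sqr_ge0. Qed.
Lemma dotv_eq0 u : dotv u u = 0 -> u = 0.
Proof.
move=> /eqP; rewrite /dotv psumr_eq0; last by move=> i _; rewrite -expr2 sqr_ge0.
move=> /allP H; apply/rowP => i; rewrite mxE.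
have := H i (mem_index_enum i); rewrite /= -expr2 sqrf_eq0 => /eqP //.
Qed.
Lemma enorm_sq u : enorm u ^+ 2 = dotv u u.
Proof. by rewrite /enorm sqr_sqrtr // dotv_ge0. Qed.
Lemma enorm_ge0 u : 0 <= enorm u.
Proof. exact: sqrtr_ge0. Qed.
Lemma enormZ a u : enorm (a *: u) = `|a| * enorm u.
Proof. by rewrite /enorm dotvZl dotvZr mulrA -expr2 sqrtrM ?sqr_ge0 // sqrtr_sqr. Qed.
Lemma enorm0 : enorm (0 : 'rV[R]_n) = 0.
Proof. by rewrite /enorm dotv0l sqrtr0. Qed.
Lemma enormN u : enorm (- u) = enorm u.
Proof. by rewrite -scaleN1r enormZ normrN1 mul1r. Qed.
Lemma enormB u v : enorm (u - v) = enorm (v - u).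
Proof. by rewrite -enormN opprB. Qed.
Lemma enorm_eq0 u : enorm u = 0 -> u = 0.
Proof. by move=> h; apply: dotv_eq0; rewrite -enorm_sq h expr0n. Qed.

Lemma coord_le_enorm u i : `|u ord0 i| <= enorm u.
Proof.
rewrite -(ler_pXn2r (_ : 0 < 2)%N) ?nnegrE ?enorm_ge0 // enorm_sq real_normK ?num_real //.
rewrite /dotv (bigD1 i) //= -expr2 lerDl; apply: sumr_ge0 => j _; by rewrite -expr2 sqr_ge0.
Qed.

Lemma norm_le_enorm u : `|u| <= enorm u.
Proof.
rewrite [leLHS]/Num.norm /= mx_normrE; apply: bigmax_le; first exact: enorm_ge0.
by move=> [i j] _ /=; rewrite (ord1 i); exact: coord_le_enorm.
Qed.

Lemma enorm_le_norm u : enorm u <= n%:R * `|u|.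
Proof.
have h : forall i, `|u ord0 i| <= `|u|.
  move=> i; rewrite [leRHS]/Num.norm /= mx_normrE; apply/bigmax_geP; right.
  by exists (ord0, i).
rewrite -(ler_pXn2r (_ : 0 < 2)%N) ?nnegrE ?enorm_ge0 ?mulr_ge0 // enorm_sq.
apply: (@le_trans _ _ (\sum_(i < n) `|u|^+2)).
  apply: ler_sum => i _; rewrite -expr2 -real_normK ?num_real //.
  by rewrite lerXn2r ?nnegrE.
rewrite sumr_const card_ord exprMn.
have hn : (n%:R : R) <= n%:R ^+ 2.
  rewrite -natrX ler_nat; case: (n) => [|m] //.
  by rewrite expnS leq_pmulr.
have := sqr_ge0 `|u|; set a := `|u| ^+ 2; set b := (n%:R : R).
rewrite -mulr_natl -/b; move=> a0; exact: ler_wpM2r.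
Qed.

End LA.

Section G.
Variables (R : realType) (n : nat).

Lemma grad_unique (phi : 'rV[R]_n -> \bar R) x g1 g2 :
  is_gradient phi x g1 -> is_gradient phi x g2 -> g1 = g2.
Proof.
move=> [_ H1] [_ H2]; apply/eqP; rewrite -subr_eq0; apply/eqP.
set g := g1 - g2.
have [/enorm_eq0 //|Nne] := eqVneq (enorm g) 0.
have N0 : 0 < enorm g by rewrite lt_neqAle eq_sym Nne enorm_ge0.
set N := enorm g in N0 Nne.
have e0 : 0 < N / 4 by rewrite divr_gt0.
have [d1 d10 Hd1] := H1 _ e0; have [d2 d20 Hd2] := H2 _ e0.
set t := Num.min d1 d2 / (2 * N).
have t0 : 0 < t by rewrite divr_gt0 ?lt_min ?d10 ?d20 // mulr_gt0.
have hx : x + t *: g - x = t *: g by rewrite addrC addKr.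
have nh : enorm (x + t *: g - x) = t * N by rewrite hx enormZ gtr0_norm.
have tN : t * N = Num.min d1 d2 / 2.
  by rewrite /t; field; rewrite Nne.
have hd1 : enorm (x + t *: g - x) < d1.
  rewrite nh tN; apply: (@lt_le_trans _ _ (Num.min d1 d2)); last by rewrite ge_min lexx.
  rewrite ltr_pdivrMr // ltr_pMr ?lt_min ?d10 ?d20 //; lra.
have hd2 : enorm (x + t *: g - x) < d2.
  rewrite nh tN; apply: (@lt_le_trans _ _ (Num.min d1 d2)); last by rewrite ge_min lexx orbT.
  rewrite ltr_pdivrMr // ltr_pMr ?lt_min ?d10 ?d20 //; lra.
have [_ A1] := Hd1 _ hd1; have [_ A2] := Hd2 _ hd2.
move: A1 A2; rewrite nh hx.
rewrite !ler_norml => /andP[A1 A1'] /andP[A2 A2'].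
have : dotv g (t *: g) <= N / 4 * (t * N) * 2.
  rewrite /g dotvBl; lra.
rewrite dotvZr -enorm_sq -/N => h.
have : t * N ^+ 2 <= t * N ^+ 2 / 2 by move: h; rewrite expr2; lra.
have : 0 < t * N ^+ 2 by rewrite mulr_gt0 // exprn_gt0.
move=> ? ?; exfalso; lra.
Qed.

End G.

Section K.
Variables (R : realType) (n : nat).
Implicit Types (f : 'rV[R]_n -> \bar R).

Lemma moreau_prox f mu x p : is_prox mu f x p ->
  moreau mu f x = (f p + (enorm (p - x) ^+ 2 / (2 * mu))%:E)%E.
Proof.
move=> hp; apply/eqP; rewrite eq_le; apply/andP; split.
  by apply: ge_ereal_inf; exists (f p + (enorm (p - x) ^+ 2 / (2 * mu))%:E)%E => //; exists p.
by apply/ereal_infP => _ [y _ <-]; exact: hp.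
Qed.

Lemma moreau_le f mu u : (moreau mu f u <= f u)%E.
Proof.
apply: ge_ereal_inf; exists (f u + (enorm (u - u) ^+ 2 / (2 * mu))%:E)%E; first by exists u.
by rewrite subrr enorm0 expr0n /= mul0r adde0.
Qed.

Lemma shift_eq (x u : 'rV[R]_n) t : t *: u + (1 - t) *: x - x = t *: (u - x).
Proof. by apply/rowP => i; rewrite !mxE; ring. Qed.

Lemma small_t (d en : R) : 0 < d -> 0 <= en ->
  let t := Num.min (1/2) (d / (2 * (en + 1))) in
  0 < t /\ t <= 1 /\ t * en < d.
Proof.
move=> d0 en0 t.
have q0 : 0 < d / (2 * (en + 1)) by rewrite divr_gt0 // mulr_gt0 //; lra.
have qe : d / (2 * (en + 1)) * (2 * (en + 1)) = d by rewrite divfK // mulf_neq0 //; lra.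
have t0 : 0 < t by rewrite lt_min q0; lra.
have t1 : t <= 1/2 by rewrite ge_min lexx.
have t2 : t <= d / (2 * (en + 1)) by rewrite ge_min lexx orbT.
split => //; split; first lra.
set q := d / (2 * (en + 1)) in q0 qe t2.
nra.
Qed.

Lemma key_ineq f mu (U : set 'rV[R]_n) x p u :
  0 < mu -> convex_on U (moreau mu f) -> U x -> U u ->
  is_prox mu f x p ->
  is_gradient (moreau mu f) x (mu^-1 *: (x - p)) ->
  (f p + (enorm (p - x) ^+ 2 / (2 * mu) + dotv (mu^-1 *: (x - p)) (u - x))%:E
     <= f u)%E.
Proof.
move=> mu0 cvx Ux Uu hp [exfin hg].
set g := mu^-1 *: (x - p).
rewrite EFinD addeA -moreau_prox //.
apply: le_trans (moreau_le f mu u).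
set e := moreau mu f.
have eE : e x = (fine (e x))%:E by rewrite fineK.
set E := fine (e x) in eE.
set en := enorm (u - x).
have en0 : 0 <= en by exact: enorm_ge0.
have gen : forall eps, 0 < eps -> exists t, [/\ 0 < t, t <= 1, e (t *: u + (1 - t) *: x) \is a fin_num &
   E + t * dotv g (u - x) - eps * (t * en) <= fine (e (t *: u + (1 - t) *: x))].
  move=> eps eps0; have [d d0 hd] := hg _ eps0.
  have [t0 [t1 ten]] := small_t d0 en0.
  set t := Num.min _ _ in t0 t1 ten.
  exists t; have hw : enorm (t *: u + (1 - t) *: x - x) = t * en.
    by rewrite shift_eq enormZ gtr0_norm.
  have hlt : enorm (t *: u + (1 - t) *: x - x) < d by rewrite hw.
  have [fw hw2] := hd _ hlt.
  split => //; move: hw2; rewrite hw shift_eq dotvZr ler_norml => /andP[h1 h2].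
  rewrite -/E in h1; lra.
have convt : forall t, 0 < t -> t <= 1 ->
   (e (t *: u + (1 - t) *: x)%R <= t%:E * e u + (1 - t)%:E * E%:E)%E.
  move=> t t0 t1; have := cvx u x t Uu Ux; rewrite -eE.
  rewrite !mul0r adde0 => h; apply: h; apply/andP; split => //; exact: ltW.
case eu : (e u) => [r| |]; last 2 first.
- by rewrite leey.
- have [t [t0 t1 fw _]] := gen 1 ltr01.
  have := convt t t0 t1; rewrite eu mulrNy gtr0_sg // mul1e.
  have -> : ((1 - t)%:E * E%:E)%E = ((1 - t) * E)%:E by [].
  rewrite addNye leeNy_eq => /eqP h; by rewrite h in fw.
rewrite eE -EFinD lee_fin.
have H : forall eps, 0 < eps -> dotv g (u - x) - eps * en <= r - E.
  move=> eps eps0; have [t [t0 t1 fw ht]] := gen eps eps0.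
  have := convt t t0 t1; rewrite eu -(fineK fw) -!EFinM -EFinD lee_fin => hc.
  have : t * (dotv g (u - x) - eps * en) <= t * (r - E) by nra.
  by rewrite ler_pM2l.
apply/ler_addgt0Pr => eps eps0.
have := H (eps / (en + 1)) (divr_gt0 eps0 (ltr_wpDl en0 ltr01)).
have : eps / (en + 1) * en <= eps.
  rewrite mulrAC ler_pdivrMr; [nra | lra].
lra.
Qed.

End K.

Section T.
Variables (R : realType) (n : nat).

Lemma coordB_cont (xb : 'rV[R]_n) i :
  continuous (fun y : 'rV[R]_n => (y - xb) ord0 i).
Proof.
move=> y.
apply: (@continuous_comp _ _ _ (fun y : 'rV[R]_n => y - xb) (fun M : 'rV[R]_n => M ord0 i)).
  exact: (@cvgB R _ _ (nbhs y) _ id (cst xb) y xb cvg_id (cvg_cst xb)).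
exact: (@coord_continuous R 1 n ord0 i).
Qed.

Lemma dot_cont (xb : 'rV[R]_n) :
  continuous (fun y : 'rV[R]_n => dotv (y - xb) (y - xb)).
Proof.
move=> y; rewrite /dotv.
apply: (@cvg_big _ _ +%R 0 predT add_continuous _ (nbhs y)).
move=> i _; apply: cvgM; exact: coordB_cont.
Qed.

Lemma enorm_cont (xb : 'rV[R]_n) :
  continuous (fun y : 'rV[R]_n => enorm (y - xb)).
Proof.
move=> y; apply: (@continuous_comp _ _ _ (fun y : 'rV[R]_n => dotv (y - xb) (y - xb)) (@Num.sqrt R)).
  exact: dot_cont.
exact: sqrt_continuous.
Qed.

Lemma cball_closed (xb : 'rV[R]_n) r : closed (cball xb r).
Proof.
have -> : cball xb r = (fun y => enorm (y - xb)) @^-1` [set s | s <= r] by [].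
apply: preimage_closed; last exact: closed_le.
by move=> y _; exact: enorm_cont.
Qed.

Lemma cball_compact (xb : 'rV[R]_n) r : compact (cball xb r).
Proof.
apply: bounded_closed_compact; last exact: cball_closed.
exists (`|xb| + r); split; first exact: num_real.
move=> M hM y /= hy.
rewrite -(subrK xb y); apply: (le_trans (ler_normD _ _)).
have := norm_le_enorm (y - xb); rewrite /cball /= in hy; lra.
Qed.

End T.

Unset Implicit Arguments.

Theorem theorem4p5 (R : realType) (n : nat) (f : 'rV[R]_n -> \bar R)
  (rho : R) (xbar : 'rV[R]_n) (lambar : R) (gam lam : nat -> R)
  (delta : R) (sigma : nat -> R) (beta : R)
  (x z : nat -> 'rV[R]_n) :
  (* Standing Setup *)
  proper_fun f -> lower_semicontinuous f -> bounded_below f ->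
  0 < rho -> weakly_convex_on rho setT f ->
  f xbar \is a fin_num -> limiting_subgrad f xbar 0 ->
  0 < lambar ->
  (exists M : R, forall k, `|gam k| <= M /\ `|lam k| <= M) ->
  (forall k, lambar < 2 * gam k /\ 2 * gam k < lam k /\ lam k < rho^-1) ->
  0 < delta ->
  (forall k, standing_fact_on rho (gam k) f (cball xbar delta) /\
             standing_fact_on rho (lam k) f (cball xbar delta)) ->
  (forall k, convex_on (cball xbar delta) (moreau (gam k) f) /\
             convex_on (cball xbar delta) (moreau (lam k) f)) ->
  (let L k := 1 + (lam k - gam k) / gam k * (1 + (1 - gam k * rho)^-1) in
   let kappa k := 1 - 2 * sigma k + sigma k ^+ 2 * L k ^+ 2 in
   (forall k, 0 < sigma k < 2 / L k ^+ 2) /\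
   0 < beta /\
   (forall k, beta < Num.min delta (delta / sigma k * (1 - Num.sqrt (kappa k))))) ->
  (* Algorithm 1 *)
  (forall k, cball xbar beta (x k)) ->
  (forall k, oball xbar delta (z k) /\
     exists g, is_gradient (moreau (gam k) f) (z k) g /\
               z k = x k - (lam k - gam k) *: g) ->
  (forall k, x k.+1 = z k - (gam k / (lam k - gam k)) *: (x k - z k)) ->
  (* Conclusion *)
  let fstar := ereal_inf [set f y | y in cball xbar beta] in
  (fun k => f (x k)) @ \oo --> fstar /\
  exists xstar, x @ \oo --> xstar /\ f xstar = fstar.
Proof.
move=> fproper flsc _ rho0 _ fxfin fsub lb0 _ hstep delta0 HSF Hcvx.
move=> [_ [beta0 hbeta]] hxball hz hxnext fstar.
have hpos k : 0 < gam k /\ gam k < lam k.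
  by have [h1 [h2 _]] := hstep k; split; lra.
have lam0 k : 0 < lam k by have [h1 h2] := hpos k; lra.
have bd : beta < delta by have := hbeta 0%N; rewrite lt_min => /andP[].
have sub_bd y : cball xbar beta y -> cball xbar delta y.
  by rewrite /cball /= => h; lra.
have xin k : cball xbar delta (x k) by exact: sub_bd.
have xbc : cball xbar delta xbar by rewrite /cball /= subrr enorm0 ltW.
have P k : is_prox (lam k) f (x k) (x k.+1).
  have [[Guniq [_ [Gchar Ggrad]]] [_ [_ [Lchar _]]]] := HSF k.
  have [zin [g [hg hzk]]] := hz k.
  have zc : cball xbar delta (z k) by move: zin; rewrite /oball /cball /=; apply: ltW.
  have [p [hp _]] := Guniq _ zc.
  have geq : g = (gam k)^-1 *: (z k - p) := grad_unique hg (Ggrad _ _ zc hp).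
  have [g0 gl] := hpos k.
  have gne : gam k != 0 by rewrite gt_eqF.
  have lgne : lam k - gam k != 0 by rewrite gt_eqF // subr_gt0.
  have lne : lam k != 0 by rewrite gt_eqF.
  have xeq : x k.+1 = p.
    rewrite hxnext; apply/rowP => i; have := congr1 (fun v : 'rV[R]_n => v ord0 i) hzk.
    rewrite geq !mxE => hi.
    have -> : x k ord0 i - z k ord0 i = (lam k - gam k) * ((gam k)^-1 * (z k ord0 i - p ord0 i)).
      by rewrite {1}hi; ring.
    by field; rewrite lgne gne.
  have veq : (lam k)^-1 *: (x k - p) = (gam k)^-1 *: (z k - p).
    apply/rowP => i; have := congr1 (fun v : 'rV[R]_n => v ord0 i) hzk.
    rewrite geq !mxE => hi.
    have -> : x k ord0 i = z k ord0 i + (lam k - gam k) * ((gam k)^-1 * (z k ord0 i - p ord0 i)).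
      by rewrite {1}hi; ring.
    by field; rewrite lne gne.
  rewrite xeq; apply/(Lchar _ _ (xin k)); rewrite veq; exact/(Gchar _ _ zc).
have Hmin u : cball xbar delta u -> (f xbar <= f u)%E.
  move=> hu; have [_ [_ [Lchar Lgrad]]] := (HSF 0%N).2.
  have hp0 : is_prox (lam 0%N) f xbar xbar.
    by apply/(Lchar _ _ xbc); rewrite subrr scaler0; exact: fsub.
  have := key_ineq (lam0 0%N) (Hcvx 0%N).2 xbc hu hp0 (Lgrad _ _ xbc hp0).
  by rewrite subrr scaler0 dotv0l enorm0 expr0n /= mul0r addr0 adde0.
have Kk k u : cball xbar delta u ->
   (f (x k.+1) + (enorm (x k.+1 - x k) ^+ 2 / (2 * lam k) +
      dotv ((lam k)^-1 *: (x k - x k.+1)) (u - x k))%:E <= f u)%E.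
  move=> hu; have [_ [_ [_ Lgrad]]] := (HSF k).2.
  exact: key_ineq (lam0 k) (Hcvx k).2 (xin k) hu (P k) (Lgrad _ _ (xin k) (P k)).
have hfin k : f (x k.+1) \is a fin_num.
  have := Kk k xbar xbc; move: fxfin (fproper.2 (x k.+1)).
  case: (f (x k.+1)) => [r| |] //; case: (f xbar) => [s| |] //.
have fbE : f xbar = (fine (f xbar))%:E by rewrite fineK.
set Fb := fine (f xbar) in fbE.
pose F k := fine (f (x k.+1)).
have fE k : f (x k.+1) = (F k)%:E by rewrite /F fineK.
have RI k u : cball xbar delta u -> f u = f xbar ->
    2 * lam k * (F k - Fb) + enorm (x k.+1 - u) ^+ 2 <= enorm (x k - u) ^+ 2.
  move=> hu hfu; have := Kk k u hu; rewrite fE hfu fbE -EFinD lee_fin.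
  have e1 : x k.+1 - u = (x k - u) + (x k.+1 - x k) by apply/rowP => i; rewrite !mxE; ring.
  have e2 : x k - x k.+1 = - (x k.+1 - x k) by rewrite opprB.
  have e3 : u - x k = - (x k - u) by rewrite opprB.
  rewrite e1 e2 e3; move: (x k - u) (x k.+1 - x k) => a b.
  rewrite !enorm_sq dotvZl dotvNl dotvNr opprK dotvDl !dotvDr (dotvC b a).
  have l0 := lam0 k; have lil : lam k * (lam k)^-1 = 1 by rewrite divff // gt_eqF.
  have -> : dotv b b / (2 * lam k) = dotv b b * (lam k)^-1 / 2.
    by field; rewrite gt_eqF.
  set il := (lam k)^-1 in lil *; clearbody il.
  move: (dotv a a) (dotv a b) (dotv b b) => AA AB B h.
  have h2 : 2 * lam k * (F k + (B * il / 2 + il * AB) - Fb) <= 0.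
    by apply: mulr_ge0_le0; lra.
  have e : 2 * lam k * (F k + (B * il / 2 + il * AB) - Fb) =
      2 * lam k * (F k - Fb) + (lam k * il) * B + 2 * (lam k * il) * AB by field.
  rewrite e lil in h2; lra.
have Mono k : F k.+1 <= F k.
  have := P k.+1 (x k.+1); rewrite subrr enorm0 expr0n /= mul0r adde0 !fE -EFinD lee_fin.
  have : 0 <= enorm (x k.+2 - x k.+1) ^+ 2 / (2 * lam k.+1).
    by rewrite divr_ge0 ?sqr_ge0 // mulr_ge0 // ltW.
  lra.
have Low k : Fb <= F k.
  by have := Hmin _ (xin k.+1); rewrite fE fbE lee_fin.
pose d k := enorm (x k - xbar) ^+ 2.
have d_ge0 k : 0 <= d k by rewrite /d sqr_ge0.
have lbl k : lambar <= 2 * lam k by have [h1 [h2 _]] := hstep k; lra.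
have Sum N : lambar * N.+1%:R * (F N - Fb) <= d 0%N - d N.+1.
  elim: N => [|N IH].
    have := RI 0%N xbar xbc erefl; have := Low 0%N; have := lbl 0%N.
    rewrite mulr1 /d => h1 h2 h3.
    have : lambar * (F 0%N - Fb) <= 2 * lam 0%N * (F 0%N - Fb) by apply: ler_wpM2r; lra.
    lra.
  have := RI N.+1 xbar xbc erefl; rewrite -/(d N.+1) -/(d N.+2) => h1.
  have h2 : lambar * N.+1%:R * (F N.+1 - Fb) <= lambar * N.+1%:R * (F N - Fb).
    by apply: ler_wpM2l; [apply: mulr_ge0; [lra | exact: ler0n] | have := Mono N; lra].
  have h3 : lambar * (F N.+1 - Fb) <= 2 * lam N.+1 * (F N.+1 - Fb).
    by apply: ler_wpM2r; [have := Low N.+1; lra | exact: lbl].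
  rewrite -[N.+2]addn1 natrD addn1.
  have -> : lambar * (N.+1%:R + 1) * (F N.+1 - Fb) =
    lambar * N.+1%:R * (F N.+1 - Fb) + lambar * (F N.+1 - Fb) by ring.
  lra.
have Fconv eps : 0 < eps -> exists N, forall k, (N <= k)%N -> F k - Fb < eps.
  move=> eps0; set C := d 0%N / (lambar * eps).
  have C0 : 0 <= C by rewrite divr_ge0 // mulr_ge0 // ltW.
  exists (Num.bound C) => k hk.
  have hK : C < k.+1%:R.
    apply: (lt_le_trans (archi_boundP C0)); rewrite ler_nat; exact: leqW.
  have hd : d 0%N < lambar * eps * k.+1%:R.
    by move: hK; rewrite /C ltr_pdivrMr ?mulr_gt0 // mulrC.
  have := Sum k; have := d_ge0 k.+1 => h1 h2.
  rewrite ltNge; apply/negP => hD.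
  have : lambar * k.+1%:R * eps <= lambar * k.+1%:R * (F k - Fb).
    by apply: ler_wpM2l => //; apply: mulr_ge0; [lra | exact: ler0n].
  have : lambar * eps * k.+1%:R = lambar * k.+1%:R * eps by ring.
  lra.
have fstarE : fstar = f xbar.
  rewrite /fstar; apply/eqP; rewrite eq_le; apply/andP; split.
    apply: ge_ereal_inf; exists (f xbar) => //; exists xbar => //.
    by rewrite /cball /= subrr enorm0 ltW.
  by apply/ereal_infP => _ [y hy <-]; exact: Hmin (sub_bd _ hy).
have conv1 : (fun k => f (x k)) @ \oo --> f xbar.
  rewrite -cvg_shiftS /=.
  have -> : (fun k => f (x k.+1)) = (fun k => (F k)%:E) by apply/funext => k; rewrite fE.
  rewrite fbE; apply: cvg_EFin; first by apply: nearW.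
  apply/cvgrPdist_le => eps eps0; have [N HN] := Fconv _ eps0.
  exists N => // k /= hk; rewrite distrC ger0_norm; last by have := Low k; lra.
  exact: ltW (HN k hk).
split; first by rewrite fstarE.
have FA : (x @ \oo) (cball xbar beta) by exists 0%N => // k _; exact: hxball.
have [xs [xsA clx]] := @cball_compact R n xbar beta (x @ \oo) _ FA.
have xsd := sub_bd _ xsA.
have fxs : f xs = f xbar.
  apply/eqP; rewrite eq_le Hmin // andbT fbE leNgt; apply/negP => hlt.
  have [a [a1 a2]] : exists a : R, Fb < a /\ (a%:E < f xs)%E.
    move: hlt; case: (f xs) => [r| |] //=.
    - rewrite lte_fin => h; exists ((Fb + r) / 2); split; first lra.
      by rewrite lte_fin; lra.
    - by move=> _; exists (Fb + 1); split; [lra | exact: ltry].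
  have [V nV hV] := flsc xs a a2.
  have aFb : 0 < a - Fb by lra.
  have [N HN] := Fconv (a - Fb) aFb.
  have FAN : (x @ \oo) [set y | exists2 k, (N.+1 <= k)%N & y = x k].
    by exists N.+1 => // k hk; exists k.
  have [_ [[k hk ->] hVk]] := clx _ V FAN nV.
  have := hV _ hVk; have ek : k = k.-1.+1 by rewrite prednK // (leq_trans _ hk).
  rewrite ek fE lte_fin; have := HN k.-1; rewrite -ltnS -ek => /(_ hk); lra.
have fej k : enorm (x k.+1 - xs) <= enorm (x k - xs).
  have := RI k xs xsd fxs; have := Low k; have := lam0 k => h1 h2 h3.
  rewrite -(ler_pXn2r (_ : 0 < 2)%N) ?nnegrE ?enorm_ge0 //.
  have : 0 <= 2 * lam k * (F k - Fb) by apply: mulr_ge0; lra.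
  lra.
have fejm m k : (m <= k)%N -> enorm (x k - xs) <= enorm (x m - xs).
  elim: k => [|k IH]; first by rewrite leqn0 => /eqP ->.
  rewrite leq_eqVlt => /orP[/eqP -> //|hk].
  exact: le_trans (fej k) (IH hk).
exists xs; split; last by rewrite fstarE.
apply/cvgrPdist_le => eps eps0.
set r := eps / (n%:R + 1).
have n0 : (0 : R) <= n%:R by exact: ler0n.
have r0 : 0 < r by rewrite divr_gt0 //; lra.
have FAR : (x @ \oo) (range x) by exists 0%N => // k _; exists k.
have [_ [[m _ <-] hb]] := clx _ (ball xs r) FAR (nbhsx_ballx xs r r0).
move: hb; rewrite -ball_normE /ball_ /= => hb.
exists m => // k /= hk.
apply: (le_trans (norm_le_enorm _)); rewrite enormB.
apply: (le_trans (fejm m k hk)); rewrite enormB.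
apply: (le_trans (enorm_le_norm _)).
have : n%:R * r <= eps.
  by rewrite /r mulrA ler_pdivrMr; [nra | lra].
have : n%:R * `|xs - x m| <= n%:R * r by apply: ler_wpM2l => //; exact: ltW.
lra.
Qed.
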